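(* For $X=\sum_{p,q}x_{p,q}a^pb^q\in\tilde{\mathcal{A}}_{conv.}$ and $f(z)=\sum_{m\ge0}t_mz^m\in\mathbb{C}\{z\}$ define $$X(f):=\sum_{m\ge0}u_mz^m,\qquad u_m:=\sum_{p+q+r=m}\frac{r!}{(q+r)!}x_{p,q}t_r.$$ Then $X(f)\in\mathbb{C}\{z\}$. The corresponding map of $\mathbb{C}$-algebras from $\tilde{\mathcal{A}}_{conv.}$ to the algebra of continuous endomorphisms of $\mathbb{C}\{z\}$ is continuous and injective.
   Context: $\tilde{\mathcal{A}}_{conv.}$ is the algebra of formal series $\sum\gamma_{p,q}a^pb^q$ in variables $a,b$ with $ab-ba=b^2$ (product extending that of the polynomial algebra with this relation) such that $|\gamma_{p,q}|\le C_RR^{p+q}q!$ for some $R>1$, $C_R>0$, with its natural inductive limit topology (over the Banach spaces defined by these bounds). The formula corresponds to letting $a$ act on $\mathbb{C}\{z\}$ as multiplication by $z$ and $b$ as the primitive vanishing at $0$. *)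

(* Defs.v *)
From mathcomp Require Import all_boot all_order all_algebra.
From mathcomp Require Import reals complex.
Set Implicit Arguments. Unset Strict Implicit. Unset Printing Implicit Defensive.
Import Order.TTheory GRing.Theory Num.Theory.
Local Open Scope ring_scope.

(* An element X = sum x_{p,q} a^p b^q of the formal algebra is represented by
   its coefficient family x : nat -> nat -> R[i].
   A power series f = sum t_m z^m is represented by t : nat -> R[i]. *)

Definition Abound (R : realType) (Rr c : R) (x : nat -> nat -> R[i]) : Prop :=
  forall p q : nat, `|x p q| <= (c * Rr ^+ (p + q) * (q`!)%:R)%:C%C.

Definition inAconv (R : realType) (x : nat -> nat -> R[i]) : Prop :=
  exists Rr : R, 1 < Rr /\ exists c : R, 0 < c /\ Abound Rr c x.

Definition Zbound (R : realType) (r c : R) (t : nat -> R[i]) : Prop :=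
  forall m : nat, `|t m| * (r ^+ m)%:C%C <= c%:C%C.

Definition conv (R : realType) (t : nat -> R[i]) : Prop :=
  exists r : R, 0 < r /\ exists c : R, Zbound r c t.

Definition act (R : realType) (x : nat -> nat -> R[i]) (t : nat -> R[i])
    (m : nat) : R[i] :=
  \sum_(p < m.+1) \sum_(q < (m - p).+1)
     ((m - p - q)`!)%:R / ((m - p)`!)%:R * x p q * t (m - p - q)%N.

Definition rfact (q k : nat) : nat := \prod_(i < k) (q + i).

(* Product in A~ (relation ab - ba = b^2): using the normal-ordering identity
   b^q a^s = sum_k (-1)^k C(s,k) rfact q k a^(s-k) b^(q+k),
   the coefficient of a^i b^j in X*Y is
   sum_{p<=i, k<=j, q<=j-k} x_{p,q} y_{i+k-p, j-q-k} (-1)^k C(i+k-p,k) rfact q k. *)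
Definition mulAt (R : realType) (x y : nat -> nat -> R[i]) (i j : nat) : R[i] :=
  \sum_(p < i.+1) \sum_(k < j.+1) \sum_(q < (j - k).+1)
     x p q * y (i + k - p)%N (j - q - k)%N *
     ((-1) ^+ k * ('C(i + k - p, k) * rfact q k)%:R).

(* Main.v *)
Require Import Defs.
From mathcomp Require Import all_boot all_order all_algebra.
From mathcomp Require Import reals complex.
Import Order.TTheory GRing.Theory Num.Theory.
Local Open Scope ring_scope.
From mathcomp Require Import zify ring lra.
From Stdlib Require Import FunctionalExtensionality.

Section Comb.
Variable R : realType.
Local Notation C := (R[i]).

Lemma factr_neq0 n : ((n`!)%:R : C) != 0.
Proof. by rewrite pnatr_eq0 -lt0n fact_gt0. Qed.

Definition T (q k r : nat) : C := (r`!)%:R / ((q + k + r)`!)%:R.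

Lemma rfactS q k : rfact q k.+1 = (rfact q k * (q + k))%N.
Proof. by rewrite /rfact big_ord_recr. Qed.

Lemma Tstep q k r : T q k r - T q k r.+1 = (q + k)%:R * T q k.+1 r.
Proof.
rewrite /T.
have -> : (q + k.+1 + r = (q + k + r).+1)%N by lia.
have -> : (q + k + r.+1 = (q + k + r).+1)%N by lia.
rewrite !factS !natrM.
have h1 := factr_neq0 r; have h2 := factr_neq0 (q + k + r).
have h3 : ((q + k + r).+1%:R : C) != 0 by rewrite pnatr_eq0.
move: h3; rewrite -[(q+k+r).+1]addn1 -[r.+1]addn1 !natrD => h3.
field; rewrite ?h1 ?h2 ?h3 //= ?andbT.
Qed.

Definition L (q s r : nat) : C :=
  \sum_(k < s.+1) (-1) ^+ k * ('C(s, k) * rfact q k)%:R * T q k r.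

Lemma Lstep q s r : L q s.+1 r = L q s r.+1.
Proof.
pose a (k : nat) : C := (-1) ^+ k * ('C(s, k) * rfact q k)%:R * T q k r.
pose b (k : nat) : C := if k is j.+1 then (-1) ^+ k * ('C(s, j) * rfact q k)%:R * T q k r else 0.
have eL : L q s.+1 r = \sum_(k < s.+2) (a k + b k).
  rewrite /L; apply: eq_bigr => -[k hk] _ /=; rewrite /a /b.
  case: k hk => [|k] hk /=; first by rewrite !bin0 addr0.
  by rewrite binS mulnDl natrD; ring.
have eR : L q s r.+1 = \sum_(k < s.+1) a k + \sum_(k < s.+1) b k.+1.
  rewrite /L -big_split /=; apply: eq_bigr => k _; rewrite /a /b.
  have := Tstep q k r; move/eqP; rewrite subr_eq => /eqP ->.
  rewrite rfactS exprS !natrM; ring.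
have ha : \sum_(k < s.+2) a k = \sum_(k < s.+1) a k.
  by rewrite big_ord_recr /= {2}/a bin_small // mul0n mulr0 mul0r addr0.
have hb : \sum_(k < s.+2) b k = \sum_(k < s.+1) b k.+1.
  by rewrite big_ord_recl /= add0r.
by rewrite eL eR big_split /= ha hb.
Qed.

Lemma Lclosed q s r : L q s r = T q 0 (r + s).
Proof.
elim: s r => [|s IH] r.
  by rewrite /L big_ord_recl big_ord0 addr0 addn0 /= bin0 /rfact big_ord0 mulr1 mul1r.
by rewrite Lstep IH addSnnS.
Qed.

Lemma sum_widen n N (F : nat -> C) : (n <= N)%N ->
  \sum_(i < n) F i = \sum_(i < N) (if (i < n)%N then F i else 0).
Proof. by move=> h; rewrite (big_ord_widen N F h) big_mkcond. Qed.

Lemma sum_widen_ord n N (G : 'I_n.+1 -> C) : (n < N)%N ->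
  \sum_(i < n.+1) G i = \sum_(i < N) (if (i < n.+1)%N then G (inord i) else 0).
Proof.
move=> h; rewrite -(@sum_widen n.+1 N (fun i => G (inord i)) h).
by apply: eq_bigr => i _; rewrite inord_val.
Qed.

Lemma sum_single N (G : 'I_N -> C) (I : nat) (hI : (I < N)%N) :
  (forall i : 'I_N, (i : nat) <> I -> G i = 0) -> \sum_i G i = G (Ordinal hI).
Proof.
move=> h; rewrite (bigD1 (Ordinal hI)) //= big1 ?addr0 // => i hi; apply: h => e.
by move: hi; rewrite -val_eqE /= e eqxx.
Qed.

Lemma if0 (b : bool) (v : C) : b = false -> (if b then v else 0) = 0.
Proof. by move=> ->. Qed.

Lemma Rnorm (x y : nat -> nat -> C) (t : nat -> C) m :
  act x (act y t) m =
  \sum_(p < m.+1) \sum_(q < m.+1) \sum_(s < m.+1) \sum_(u < m.+1) \sum_(r < m.+1)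
    (if (p + q + s + u + r == m)%N then
       x p q * y s u * t r * (T q 0 (s + u + r) * T u 0 r) else 0).
Proof.
rewrite /act; apply: eq_bigr => p _; have hp := ltn_ord p.
rewrite (@sum_widen_ord _ m.+1); last lia.
apply: eq_bigr => q _; have hq' := ltn_ord q; case: ifP => hq; rewrite ?inordK //; last first.
  symmetry; do 3 (apply: big1 => ? _); apply: if0; lia.
rewrite mulr_sumr (@sum_widen_ord _ m.+1); last lia.
apply: eq_bigr => s _; have hs' := ltn_ord s; case: ifP => hs; rewrite ?inordK //; last first.
  symmetry; do 2 (apply: big1 => ? _); apply: if0; lia.
rewrite mulr_sumr (@sum_widen_ord _ m.+1); last lia.
apply: eq_bigr => u _; have hu' := ltn_ord u; case: ifP => hu; rewrite ?inordK //; last first.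
  symmetry; do 1 (apply: big1 => ? _); apply: if0; lia.
have hr : (m - p - q - s - u < m.+1)%N by lia.
rewrite (@sum_single _ _ _ hr) /=; last first.
  move=> r hr'; apply: if0; lia.
rewrite ifT; last lia.
set r := (m - p - q - s - u)%N.
have -> : (m - p - q - s = u + 0 + r)%N by lia.
have -> : (m - p - q = s + u + r)%N by lia.
have -> : (m - p = q + 0 + (s + u + r))%N by lia.
rewrite /T; ring.
Qed.

Lemma Lnorm8 (x y : nat -> nat -> C) (t : nat -> C) m :
  act (mulAt x y) t m =
  \sum_(i < m.+1) \sum_(j < m.+1) \sum_(p < m.+1) \sum_(k < m.+1) \sum_(q < m.+1)
  \sum_(s < m.+1) \sum_(u < m.+1) \sum_(r < m.+1)
    (if [&& i + j + r == m, p <= i, k <= j, q + k <= j, s + p == i + k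
          & u + q + k == j]%N then
       x p q * y s u * t r * ((-1) ^+ k * ('C(s, k) * rfact q k)%:R *
          ((r`!)%:R / ((u + q + k + r)`!)%:R)) else 0).
Proof.
rewrite /act; apply: eq_bigr => i _; have hi := ltn_ord i.
rewrite (@sum_widen_ord _ m.+1); last lia.
apply: eq_bigr => j _; have hj' := ltn_ord j; case: ifP => hj; rewrite ?inordK //; last first.
  symmetry; do 6 (apply: big1 => ? _); apply: if0; lia.
rewrite /mulAt mulr_sumr mulr_suml (@sum_widen_ord _ m.+1); last lia.
apply: eq_bigr => p _; have hp' := ltn_ord p; case: ifP => hp; rewrite ?inordK //; last first.
  symmetry; do 5 (apply: big1 => ? _); apply: if0; lia.
rewrite mulr_sumr mulr_suml (@sum_widen_ord _ m.+1); last lia.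
apply: eq_bigr => k _; have hk' := ltn_ord k; case: ifP => hk; rewrite ?inordK //; last first.
  symmetry; do 4 (apply: big1 => ? _); apply: if0; lia.
rewrite mulr_sumr mulr_suml (@sum_widen_ord _ m.+1); last lia.
apply: eq_bigr => q _; have hq' := ltn_ord q; case: ifP => hq; rewrite ?inordK //; last first.
  symmetry; do 3 (apply: big1 => ? _); apply: if0; lia.
have hs : (i + k - p < m.+1)%N by lia.
rewrite (@sum_single _ _ _ hs) /=; last first.
  move=> s hs'; do 2 (apply: big1 => ? _); apply: if0; lia.
have hu : (j - q - k < m.+1)%N by lia.
rewrite (@sum_single _ _ _ hu) /=; last first.
  move=> u hu'; do 1 (apply: big1 => ? _); apply: if0; lia.
have hr : (m - i - j < m.+1)%N by lia.
rewrite (@sum_single _ _ _ hr) /=; last first.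
  move=> r hr'; apply: if0; lia.
rewrite ifT; last lia.
set s := (i + k - p)%N; set u := (j - q - k)%N; set r := (m - i - j)%N.
have -> : (m - i = u + q + k + r)%N by rewrite /u /r; lia.
ring.
Qed.

Lemma mv7 N (F : 'I_N -> 'I_N -> 'I_N -> 'I_N -> 'I_N -> 'I_N -> 'I_N -> 'I_N -> C) :
  \sum_(a < N) \sum_(b < N) \sum_(c < N) \sum_(d < N) \sum_(e < N) \sum_(f < N)
    \sum_(g < N) \sum_(h < N) F a b c d e f g h =
  \sum_(b < N) \sum_(c < N) \sum_(d < N) \sum_(e < N) \sum_(f < N)
    \sum_(g < N) \sum_(h < N) \sum_(a < N) F a b c d e f g h.
Proof.
rewrite exchange_big; apply: eq_bigr => b _.
rewrite exchange_big; apply: eq_bigr => c _.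
rewrite exchange_big; apply: eq_bigr => d _.
rewrite exchange_big; apply: eq_bigr => e _.
rewrite exchange_big; apply: eq_bigr => f _.
rewrite exchange_big; apply: eq_bigr => g _.
by rewrite exchange_big.
Qed.

Lemma mv4 N (F : 'I_N -> 'I_N -> 'I_N -> 'I_N -> 'I_N -> C) :
  \sum_(a < N) \sum_(b < N) \sum_(c < N) \sum_(d < N) \sum_(e < N) F a b c d e =
  \sum_(b < N) \sum_(c < N) \sum_(d < N) \sum_(e < N) \sum_(a < N) F a b c d e.
Proof.
rewrite exchange_big; apply: eq_bigr => b _.
rewrite exchange_big; apply: eq_bigr => c _.
rewrite exchange_big; apply: eq_bigr => d _.
by rewrite exchange_big.
Qed.

Lemma TT q k u r : (r`!)%:R / ((u + q + k + r)`!)%:R = T q k (u + r) * T u 0 r :> C.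
Proof.
rewrite /T addn0 (_ : (q + k + (u + r) = u + q + k + r)%N); last lia.
have h1 := factr_neq0 (u + r).
have h2 := factr_neq0 (u + q + k + r).
by field; rewrite h1 h2.
Qed.

Lemma act_mul (x y : nat -> nat -> C) (t : nat -> C) m :
  act (mulAt x y) t m = act x (act y t) m.
Proof.
rewrite Lnorm8 Rnorm mv7 mv7; apply: eq_bigr => p _; rewrite mv4.
apply: eq_bigr => q _; apply: eq_bigr => s _; apply: eq_bigr => u _; apply: eq_bigr => r _.
have hp := ltn_ord p; have hq := ltn_ord q; have hs := ltn_ord s.
have hu := ltn_ord u; have hr := ltn_ord r.
case: ifP => hb; last first.
  do 3 (apply: big1 => ? _); apply: if0; lia.
transitivity (\sum_(k < m.+1) (if (k <= s)%N then x p q * y s u * t r *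
   ((-1) ^+ k * ('C(s, k) * rfact q k)%:R * (T q k (u + r) * T u 0 r)) else 0)).
  apply: eq_bigr => k _; have hk := ltn_ord k.
  case: ifP => hks; last first.
    do 2 (apply: big1 => ? _); apply: if0; lia.
  have hI : (s + p - k < m.+1)%N by lia.
  rewrite (@sum_single _ _ _ hI) /=; last first.
    move=> i hi; apply: big1 => ? _; apply: if0; lia.
  have hJ : (u + q + k < m.+1)%N by lia.
  rewrite (@sum_single _ _ _ hJ) /=; last first.
    move=> j hj; apply: if0; lia.
  by rewrite ifT ?TT //; lia.
rewrite -(@sum_widen s.+1 m.+1 (fun k => x p q * y s u * t r *
   ((-1) ^+ k * ('C(s, k) * rfact q k)%:R * (T q k (u + r) * T u 0 r)))); last lia.
rewrite -mulr_sumr.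
have -> : \sum_(i < s.+1) (-1) ^+ i * ('C(s, i) * rfact q i)%:R * (T q i (u + r) * T u 0 r)
   = L q s (u + r) * T u 0 r.
  by rewrite /L mulr_suml; apply: eq_bigr => k _; rewrite mulrA.
by rewrite Lclosed (_ : (u + r + s = s + u + r)%N) //; lia.
Qed.

Definition f (q r : nat) : C := (r`!)%:R / ((q + r)`!)%:R.

Lemma prodfact c d : (\prod_(j < d) (c + 1 + j) * c`!)%N = (c + d)`!.
Proof.
elim: d => [|d IH]; first by rewrite big_ord0 mul1n addn0.
rewrite big_ord_recr /= mulnAC IH (_ : (c + d.+1 = (c + d).+1)%N) ?factS; last lia.
rewrite mulnC; congr (_ * _)%N; lia.
Qed.

Lemma sizeprod d (c : nat -> C) : (size (\prod_(j < d) ('X + (c j)%:P))%R <= d.+1)%N.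
Proof.
elim: d => [|d IH]; first by rewrite big_ord0 size_poly1.
rewrite big_ord_recr /=; apply: leq_trans (size_polyMleq _ _) _.
by rewrite size_XaddC addn2 /=.
Qed.

Lemma inj_core n (a : nat -> C) :
  (forall r, \sum_(q < n) a q * f q r = 0) -> forall q, (q < n)%N -> a q = 0.
Proof.
elim: n => [|n IH] h q0 hq0; first by [].
pose P : {poly C} :=
  \sum_(q < n.+1) a q *: \prod_(j < n - q) ('X + ((q + 1 + j)%:R)%:P).
have HP : forall r : nat, P.[r%:R] = 0.
  move=> r; rewrite horner_sum.
  transitivity (((r + n)`!)%:R / (r`!)%:R * \sum_(q < n.+1) a q * f q r);
    last by rewrite h mulr0.
  rewrite mulr_sumr; apply: eq_bigr => q _; have hq := ltn_ord q.
  rewrite hornerZ horner_prod.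
  under eq_bigr do rewrite hornerD hornerX hornerC -natrD.
  rewrite -natr_prod.
  have e2 : ((r + n)`! = \prod_(j < n - q) (r + (q + 1 + j)) * (q + r)`!)%N.
    rewrite (_ : (r + n = q + r + (n - q))%N); last lia.
    rewrite -prodfact; congr (_ * _)%N; apply: eq_bigr => j _; lia.
  rewrite /f e2 natrM.
  have h1 := factr_neq0 r; have h2 := factr_neq0 (q + r).
  by field; rewrite h1 h2.
have P0 : P = 0.
  apply/eqP; apply/negPn/negP => nz.
  have Hr : all (root P) [seq i%:R | i <- iota 0 n.+1].
    by apply/allP => z /mapP [i _ ->]; apply/rootP/HP.
  have Hu : uniq [seq (i%:R : C) | i <- iota 0 n.+1].
    rewrite map_inj_uniq ?iota_uniq //.
    by move=> i j /eqP; rewrite eqr_nat => /eqP.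
  have := max_poly_roots nz Hr Hu.
  rewrite size_map size_iota ltnNge.
  have -> // : (size P <= n.+1)%N.
  apply: leq_trans (size_sum _ _ _) _; apply/bigmax_leqP => q _.
  apply: leq_trans (size_scale_leq _ _) _; apply: leq_trans (sizeprod (n - q) (fun j => (q + 1 + j)%:R)) _.
  by rewrite ltnS leq_subr.
have an : a n = 0.
  have := congr1 (fun p => p.[- (n%:R)]) P0; rewrite /= horner0 /P horner_sum.
  rewrite big_ord_recr /= subnn big1 ?add0r; last first.
    move=> q _; have hq := ltn_ord q.
    rewrite hornerZ horner_prod.
    have hj : (n - q - 1 < n - q)%N by lia.
    rewrite (bigD1 (Ordinal hj)) //= hornerD hornerX hornerC.
    have -> : (q + 1 + (n - q - 1) = n)%N by lia.
    by rewrite addNr mul0r mulr0.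
  by rewrite hornerZ horner_prod big_ord0 mulr1.
have h' : forall r, \sum_(q < n) a q * f q r = 0.
  by move=> r; have := h r; rewrite big_ord_recr /= an mul0r addr0.
case: (ltnP q0 n) => hq; first exact: IH h' q0 hq.
by have -> : q0 = n by lia.
Qed.

Lemma act_delta (x : nat -> nat -> C) n r :
  act x (fun k => if k == r then 1 else 0) (n + r) = \sum_(q < n.+1) x (n - q)%N q * f q r.
Proof.
have -> : \sum_(q < n.+1) x (n - q)%N q * f q r = \sum_(p < n.+1) x p (n - p)%N * f (n - p) r.
  rewrite (reindex_inj rev_ord_inj) /=; apply: eq_bigr => p _; have hp := ltn_ord p.
  by rewrite (_ : (n - (n - p) = p)%N) //; lia.
rewrite (@sum_widen n.+1 (n + r).+1 (fun p => x p (n - p)%N * f (n - p) r)); last lia.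
rewrite /act; apply: eq_bigr => p _; have hp := ltn_ord p.
case: ifP => hpn; last first.
  apply: big1 => q _; have hq := ltn_ord q.
  by rewrite ifF ?mulr0 //; apply/negbTE; lia.
have hI : (n - p < (n + r - p).+1)%N by lia.
rewrite (@sum_single _ _ _ hI) /=; last first.
  by move=> q hq; have hq' := ltn_ord q; rewrite ifF ?mulr0 //; apply/negbTE; lia.
rewrite ifT; last lia.
rewrite /f (_ : (n + r - p - (n - p) = r)%N); last lia.
rewrite (_ : (n + r - p = n - p + r)%N); last lia.
by rewrite mulr1 mulrC mulrA.
Qed.
End Comb.

Section Bnd.
Variable R : realType.
Local Open Scope complex_scope.

Lemma leT (T : numDomainType) (y x z : T) : x <= y -> y <= z -> x <= z.
Proof. exact: le_trans. Qed.

Lemma factr_neq0R n : ((n`!)%:R : R) != 0.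
Proof. by rewrite pnatr_eq0 -lt0n fact_gt0. Qed.

Lemma cq_le1 q r0 : 0 <= (r0`!)%:R / ((q + r0)`!)%:R * (q`!)%:R :> R /\
                    (r0`!)%:R / ((q + r0)`!)%:R * (q`!)%:R <= 1 :> R.
Proof.
have hf : (0 : R) < ((q + r0)`!)%:R by rewrite ltr0n fact_gt0.
split; first by rewrite mulr_ge0 ?divr_ge0 ?ler0n.
rewrite mulrAC ler_pdivrMr // mul1r -natrM ler_nat.
have := bin_fact (leq_addr r0 q); rewrite addKn => <-.
by rewrite mulnC leq_pmull // bin_gt0 leq_addr.
Qed.

Lemma term_bound (Rr r r' cx ct : R) p q r0 :
  0 < r -> 0 <= r' -> 0 <= Rr -> 0 <= cx -> 0 <= ct ->
  Rr * r' <= 4^-1 -> r' / r <= 4^-1 ->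
  (r0`!)%:R / ((q + r0)`!)%:R * (cx * Rr ^+ (p + q) * (q`!)%:R) * (ct / r ^+ r0)
     * r' ^+ (p + q + r0)
  <= cx * ct * (4^-1) ^+ (p + q + r0).
Proof.
move=> hr hr' hR hcx hct hA hB.
have [hc0 hc1] := cq_le1 q r0.
have hrn : r ^+ r0 != 0 by rewrite expf_neq0 // gt_eqF.
have hf := factr_neq0R (q + r0).
have -> : (r0`!)%:R / ((q + r0)`!)%:R * (cx * Rr ^+ (p + q) * (q`!)%:R) * (ct / r ^+ r0)
     * r' ^+ (p + q + r0) =
   ((r0`!)%:R / ((q + r0)`!)%:R * (q`!)%:R) * (cx * ct) * ((Rr * r') ^+ (p + q) * (r' / r) ^+ r0).
  rewrite exprMn expr_div_n (exprD r' (p + q) r0).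
  ring.
rewrite [X in _ <= X](_ : _ = 1 * (cx * ct) * ((4^-1) ^+ (p + q) * (4^-1) ^+ r0)); last first.
  by rewrite mul1r exprD.
have h4 : (0 : R) <= 4^-1 by rewrite invr_ge0 ler0n.
have hAB : 0 <= Rr * r' by apply: mulr_ge0.
have hBr : 0 <= r' / r by apply: divr_ge0 => //; apply: ltW.
have hcc : 0 <= cx * ct by apply: mulr_ge0.
have nA : Rr * r' \in Num.nneg by rewrite nnegrE.
have nB : r' / r \in Num.nneg by rewrite nnegrE.
have n4 : (4^-1 : R) \in Num.nneg by rewrite nnegrE.
apply: ler_pM.
- exact: mulr_ge0.
- by apply: mulr_ge0; apply: exprn_ge0.
- by apply: ler_pM => //; apply: lexx.
- apply: ler_pM; try apply: exprn_ge0 => //.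
  + exact: (lerXn2r (p + q) nA n4 hA).
  + exact: (lerXn2r r0 nB n4 hB).
Qed.

Local Notation C := (R[i]).

Lemma cge0 a b : 0 <= (a%:R / b%:R : C).
Proof. by apply: divr_ge0; apply: ler0n. Qed.

Lemma natC n : (n%:R : C) = (n%:R : R)%:C.
Proof. by rewrite rmorph_nat. Qed.

Lemma divC (a b : R) : (a / b)%:C = a%:C / b%:C :> C.
Proof. by rewrite fmorph_div. Qed.

Lemma sq_le_pow4 m : (m.+1 * m.+1 <= 4 ^ m)%N.
Proof.
have h : (m < 2 ^ m)%N by apply: ltn_expl.
have e : (4 ^ m = 2 ^ m * 2 ^ m)%N by rewrite -expnMn.
rewrite e; exact: leq_mul.
Qed.

Lemma sum_const_bound (K : R) m : 0 <= K ->
  \sum_(p < m.+1) \sum_(q < (m - p).+1) K <= K *+ (m.+1 * m.+1).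
Proof.
move=> hK.
apply: (@leT _ (\sum_(p < m.+1) K *+ m.+1)).
  apply: ler_sum => p _; rewrite sumr_const card_ord.
  rewrite -(mulr_natr K (m - p).+1) -(mulr_natr K m.+1).
  by apply: ler_wpM2l => //; rewrite ler_nat; lia.
by rewrite sumr_const card_ord -mulrnA.
Qed.

Lemma act_bound (Rr r cx ct : R) (x : nat -> nat -> C) (t : nat -> C) m :
  1 < Rr -> 0 < r -> Abound Rr cx x -> Zbound r ct t ->
  `|act x t m| * ((r / (4 * (1 + Rr * r))) ^+ m)%:C <= (1 * cx * ct)%:C.
Proof.
move=> hR hr hA hZ.
set r' := r / (4 * (1 + Rr * r)).
have hcx : 0 <= cx.
  have := le_trans (normr_ge0 _) (hA 0%N 0%N).
  by rewrite ler0c expr0 mulr1 mulr1.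
have hct : 0 <= ct.
  have := le_trans (normr_ge0 _) (le_trans _ (hZ 0%N)).
  rewrite ler0c; apply; rewrite expr0 mulr1; exact: lexx.
have hD : 0 < 4 * (1 + Rr * r) by apply: mulr_gt0 => //; nra.
have hr' : 0 <= r' by apply: divr_ge0; apply: ltW.
have hA' : Rr * r' <= 4^-1.
  rewrite /r' mulrA ler_pdivrMr //; nra.
have hB' : r' / r <= 4^-1.
  rewrite ler_pdivrMr // /r' ler_pdivrMr //; nra.
have ht : forall k, `|t k| <= (ct / r ^+ k)%:C.
  move=> k; rewrite divC ler_pdivlMr ?ltcR ?exprn_gt0 //; exact: hZ.
pose S := \sum_(p < m.+1) \sum_(q < (m - p).+1)
   ((m - p - q)`!%:R / (m - p)`!%:R * (cx * Rr ^+ (p + q) * q`!%:R) * (ct / r ^+ (m - p - q))).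
apply: (@leT _ (S%:C * (r' ^+ m)%:C)).
  apply: ler_wpM2r; first by rewrite ler0c exprn_ge0.
  rewrite /act /S !rmorph_sum; apply: le_trans (ler_norm_sum _ _ _) _.
  apply: ler_sum => p _; rewrite rmorph_sum; apply: le_trans (ler_norm_sum _ _ _) _.
  apply: ler_sum => q _.
  rewrite 2!normrM 2!rmorphM /= (ger0_norm (cge0 _ _)).
  have -> : (((m - p - q)`!%:R / (m - p)`!%:R : R)%:C) =
            ((m - p - q)`!%:R / (m - p)`!%:R : C) by rewrite divC !natC.
  have hc := cge0 (m - p - q)`! (m - p)`!.
  apply: ler_pM.
  - by apply: mulr_ge0 => //; apply: normr_ge0.
  - exact: normr_ge0.
  - by apply: ler_wpM2l => //; exact: hA.
  - exact: ht.
rewrite -rmorphM lecR /S mulr_suml.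
apply: (@leT _ (\sum_(p < m.+1) \sum_(q < (m - p).+1) (cx * ct * (4^-1) ^+ m))).
  apply: ler_sum => p _; rewrite mulr_suml; apply: ler_sum => q _.
  have hp := ltn_ord p; have hq := ltn_ord q.
  set r0 := (m - p - q)%N.
  have e1 : (m - p = q + r0)%N by rewrite /r0; lia.
  have e2 : (p + q + r0 = m)%N by rewrite /r0; lia.
  have := @term_bound Rr r r' cx ct p q r0 hr hr' (ltW (lt_trans ltr01 hR)) hcx hct hA' hB'.
  by rewrite e2 -e1.
have hK : 0 <= cx * ct * (4^-1) ^+ m by rewrite mulr_ge0 ?exprn_ge0 ?invr_ge0 ?mulr_ge0.
apply: le_trans (sum_const_bound _ m hK) _.
have -> : cx * ct * 4^-1 ^+ m *+ (m.+1 * m.+1) =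
   (cx * ct) * (4^-1 ^+ m * (m.+1 * m.+1)%:R) by rewrite mulr_natr mulrnAr.
rewrite mul1r.
have hcc : 0 <= cx * ct by apply: mulr_ge0.
apply: ler_piMr => //.
rewrite exprVn mulrC ler_pdivrMr ?exprn_gt0 // mul1r.
rewrite (_ : (4 : R) = 4%:R) // -natrX ler_nat; exact: sq_le_pow4.
Qed.
End Bnd.

Theorem lemma1p1p5 (R : realType) :
  (* X(f) is a convergent power series *)
  (forall (x : nat -> nat -> R[i]) (t : nat -> R[i]),
      inAconv x -> conv t -> conv (act x t)) /\
  (* continuity (of each X(.) on C{z} and of X |-> X(.)), stated on the
     Banach steps: for every step Rr > 1 of A~_conv and every radius r > 0
     there are a radius r' > 0 and a constant K with
     ||X(f)||_{r'} <= K ||X||_Rr ||f||_r *)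
  (forall Rr r : R, 1 < Rr -> 0 < r ->
     exists r' : R, 0 < r' /\ exists K : R, 0 < K /\
       forall (x : nat -> nat -> R[i]) (t : nat -> R[i]) (cx ct : R),
         Abound Rr cx x -> Zbound r ct t -> Zbound r' (K * cx * ct) (act x t)) /\
  (* it is a morphism for the product of A~_conv *)
  (forall (x y : nat -> nat -> R[i]) (t : nat -> R[i]),
      inAconv x -> inAconv y -> conv t ->
      act (mulAt x y) t = act x (act y t)) /\
  (* injectivity *)
  (forall x : nat -> nat -> R[i],
      inAconv x -> (forall t : nat -> R[i], conv t -> act x t = (fun _ => 0)) ->
      x = (fun _ _ => 0)).
Proof.
have rpos : forall Rr r : R, 1 < Rr -> 0 < r -> 0 < r / (4 * (1 + Rr * r)).
  move=> Rr r hR hr; apply: divr_gt0 => //; apply: mulr_gt0 => //; nra.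
split.
  move=> x t [Rr [hR [cx [hcx hA]]]] [r [hr [ct hZ]]].
  exists (r / (4 * (1 + Rr * r))); split; first exact: rpos.
  exists (1 * cx * ct) => m; exact: act_bound.
split.
  move=> Rr r hR hr; exists (r / (4 * (1 + Rr * r))); split; first exact: rpos.
  exists 1; split; first exact: ltr01.
  move=> x t cx ct hA hZ m; exact: act_bound.
split.
  by move=> x y t _ _ _; apply: functional_extensionality => m; exact: act_mul.
move=> x _ h; apply: functional_extensionality => p; apply: functional_extensionality => q.
have H : forall r, \sum_(q' < (p + q).+1) x (p + q - q')%N q' * f R q' r = 0.
  move=> r; rewrite -act_delta.
  have hc : conv (fun k => if k == r then 1 else 0 : R[i]).
    exists 1; split; first exact: ltr01.
    exists 1 => k; rewrite expr1n mulr1.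
    by case: (k == r); rewrite ?normr1 ?normr0 ?lexx ?ler01.
  by rewrite (h _ hc).
have hq : (q < (p + q).+1)%N by rewrite ltnS leq_addl.
by have := @inj_core R _ (fun q' => x (p + q - q')%N q') H q hq; rewrite /= addnK.
Qed.
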